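(* Let $\partial(X)$ be a tight cut of a connected bipartite cubic graph $H[A,B]$, with notation chosen so that $X^+\subseteq B$, and let $H_1:=H/\overline{X}\rightarrow\overline{x}$ and $H_2:=H/X\rightarrow x$. Then: (i) for every $a\in X^-$ and $b\in\overline{X}^-$, the pair $(a,b)$ is not $\lambda$-matchable in $H$; (ii) for every $a\in X^-$ and $b\in X^+$, $(a,b)$ is $\lambda$-matchable in $H$ if and only if it is $\lambda$-matchable in $H_1$; (iii) for every $a\in\overline{X}^+$ and $b\in X^+$, $(a,b)$ is $\lambda$-matchable in $H$ if and only if $(\overline{x},b)$ is $\lambda$-matchable in $H_1$ and $(a,x)$ is $\lambda$-matchable in $H_2$.
   Context: Graphs are loopless but may have parallel edges. A cut $C$ of a matching covered graph is tight if $|C\cap M|=1$ for every perfect matching $M$; tight cuts are odd. For an odd cut $\partial(X)$ of a bipartite graph $H[A,B]$, $X^+$ and $X^-$ denote the larger and smaller of $X\cap A$ and $X\cap B$, and $\overline{X}^+,\overline{X}^-$ are defined analogously for $\overline{X}=V(H)-X$ (so with $X^+\subseteq B$ one has $X^-\subseteq A$, $\overline{X}^+\subseteq A$, $\overline{X}^-\subseteq B$). $H/\overline{X}\rightarrow\overline{x}$ denotes $H$ with $\overline{X}$ shrunk to a vertex $\overline{x}$ (similarly $H/X\rightarrow x$); these contractions are bipartite cubic, with $\overline{x}$ in the class of $A$ and $x$ in the class of $B$. For a connected bipartite cubic graph and vertices $a,b$ in different color classes, an $(a,b)$-matching is a spanning subgraph with $a,b$ of degree $3$ and all other vertices of degree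 $1$; $(a,b)$ is $\lambda$-matchable if one exists. *)

(* Defs.v *)
From mathcomp Require Import all_boot.
Set Implicit Arguments. Unset Strict Implicit. Unset Printing Implicit Defensive.

Record mgraph := MGraph {
  vert : finType;
  edge : finType;
  endp1 : edge -> vert;
  endp2 : edge -> vert }.

Section Defs.
Variable G : mgraph.

Definition deg (F : {set edge G}) (v : vert G) : nat :=
  #|[set e in F | endp1 e == v]| + #|[set e in F | endp2 e == v]|.

Definition cubic : Prop := forall v, deg setT v = 3.

Definition adj : rel (vert G) := fun u v =>
  [exists e, ((endp1 e == u) && (endp2 e == v)) || ((endp1 e == v) && (endp2 e == u))].

Definition connected : Prop := forall u v, connect adj u v.

Definition bipartite (A : {set vert G}) : Prop :=
  forall e, (endp1 e \in A) != (endp2 e \in A).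

Definition perfect_matching (M : {set edge G}) : Prop := forall v, deg M v = 1.

Definition cut (X : {set vert G}) : {set edge G} :=
  [set e | (endp1 e \in X) != (endp2 e \in X)].

Definition tight_cut (X : {set vert G}) : Prop :=
  [/\ X != set0, X != setT &
     forall M, perfect_matching M -> #|cut X :&: M| = 1].

Definition lambda_matching (a b : vert G) (F : {set edge G}) : Prop :=
  forall v, deg F v = if (v == a) || (v == b) then 3 else 1.

Definition lambda_matchable (a b : vert G) : Prop := exists F, lambda_matching a b F.

End Defs.

(* G / S -> s : shrink S to a single new vertex, represented by [None];
   vertex v outside S is represented by [Some v] (= insub v);
   edges with both ends in S are deleted. *)
Definition contract (G : mgraph) (S : {set vert G}) : mgraph :=
  @MGraph (option {v : vert G | v \notin S})
          {e : edge G | ~~ ((endp1 e \in S) && (endp2 e \in S))}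
          (fun e => insub (endp1 (val e)))
          (fun e => insub (endp2 (val e))).

(* Main.v *)
Require Import Defs.
From mathcomp Require Import all_boot zify.
Set Implicit Arguments. Unset Strict Implicit. Unset Printing Implicit Defensive.


Lemma count_fib (V E : finType) (F : {set E}) (f : E -> V) (S : {set V}) :
  #|[set e in F | f e \in S]| = \sum_(v in S) #|[set e in F | f e == v]|.
Proof.
rewrite -sum1_card (partition_big f (mem S)) /=; last by move=> e; rewrite inE => /andP[].
apply: eq_bigr => v vS; rewrite sum1_card; apply: eq_card => e.
rewrite unfold_in !inE; case: (f e =P v) => [->|]; rewrite ?vS ?andbT ?andbF //.
Qed.

Definition nbr (V E : finType) (e1 e2 : E -> V) (W S : {set V}) :=
  [set w in W | [exists e, (e1 e \in S) && (e2 e == w)]].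

Definition hmatch (V E : finType) (e1 e2 : E -> V) (U W : {set V}) (M : {set E}) :=
 [/\ forall e, e \in M -> (e1 e \in U) && (e2 e \in W),
     forall u, u \in U -> #|[set e in M | e1 e == u]| = 1 &
     forall w, #|[set e in M | e2 e == w]| <= 1].

Lemma hmatchU (V E : finType) (e1 e2 : E -> V) U1 W1 M1 U2 W2 M2 :
  hmatch e1 e2 U1 W1 M1 -> hmatch e1 e2 U2 W2 M2 ->
  [disjoint U1 & U2] -> [disjoint W1 & W2] ->
  hmatch e1 e2 (U1 :|: U2) (W1 :|: W2) (M1 :|: M2).
Proof.
move=> [h1 h2 h3] [k1 k2 k3] dU dW; split.
- move=> e; rewrite inE => /orP[/h1|/k1] /andP[a b]; by rewrite !inE a b ?orbT.
- move=> u; rewrite inE => /orP[uU|uU].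
  + rewrite -(h2 u uU); apply: eq_card => e; rewrite !inE.
    case: (e1 e =P u) => [eu|]; rewrite ?andbT ?andbF //.
    case eM2: (e \in M2); rewrite ?orbF ?orbT //.
    move: (k1 e eM2) => /andP[]; rewrite eu => uU2 _.
    by move: dU; rewrite disjoint_subset => /subsetP/(_ u uU); rewrite inE uU2.
  + rewrite -(k2 u uU); apply: eq_card => e; rewrite !inE.
    case: (e1 e =P u) => [eu|]; rewrite ?andbT ?andbF //.
    case eM1: (e \in M1); rewrite ?orbF ?orbT //=.
    move: (h1 e eM1) => /andP[]; rewrite eu => uU1 _.
    by move: dU; rewrite disjoint_subset => /subsetP/(_ u uU1); rewrite inE uU.
- move=> w; case wW1: (w \in W1).
  + apply: leq_trans (h3 w); apply: subset_leq_card; apply/subsetP => e; rewrite !inE.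
    case/andP => /orP[->//|eM2] /eqP ew.
    move: (k1 e eM2) => /andP[_]; rewrite ew => wW2.
    by move: dW; rewrite disjoint_subset => /subsetP/(_ w wW1); rewrite inE wW2.
  + apply: leq_trans (k3 w); apply: subset_leq_card; apply/subsetP => e; rewrite !inE.
    case/andP => /orP[eM1|->//] /eqP ew.
    by move: (h1 e eM1) => /andP[_]; rewrite ew wW1.
Qed.

Lemma hmatch0 (V E : finType) (e1 e2 : E -> V) W : hmatch e1 e2 set0 W set0.
Proof.
split=> [e|u|w]; rewrite ?inE //.
by rewrite (_ : [set e in set0 | _] = set0) ?cards0 //; apply/setP=> e; rewrite !inE.
Qed.

Lemma hmatch1 (V E : finType) (e1 e2 : E -> V) e0 :
  hmatch e1 e2 [set e1 e0] [set e2 e0] [set e0].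
Proof.
split=> [e|u'|w'].
* by rewrite !inE => /eqP ->; rewrite !eqxx.
* rewrite inE => /eqP ->; rewrite -(cards1 e0); apply: eq_card => e; rewrite !inE.
  by case: (e =P e0) => [->|]; rewrite ?eqxx.
* rewrite -(cards1 e0); apply: subset_leq_card; apply/subsetP => e; rewrite !inE => /andP[] //.
Qed.

Lemma hall (V E : finType) (e1 e2 : E -> V) n : forall U W : {set V},
  #|U| <= n -> (forall S : {set V}, S \subset U -> #|S| <= #|nbr e1 e2 W S|) ->
  exists M, hmatch e1 e2 U W M.
Proof.
elim: n => [|n IH] U W hU hH.
  move: hU; rewrite leqn0 cards_eq0 => /eqP ->; exists set0; exact: hmatch0.
case: (boolP [exists S : {set V}, [&& S \subset U, S != set0, S != U & #|nbr e1 e2 W S| <= #|S|]]).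
- case/existsP => S /and4P[sSU nS0 nSU cS].
  have pS : S \proper U by rewrite properEneq nSU.
  have cS' : #|nbr e1 e2 W S| = #|S| by apply/eqP; rewrite eqn_leq cS hH.
  have [M1 hM1] : exists M, hmatch e1 e2 S (nbr e1 e2 W S) M.
    apply: IH; first by have := proper_card pS; move: hU; clear; lia.
    move=> S' sS'; apply: leq_trans (hH S' (subset_trans sS' sSU)) _.
    apply: subset_leq_card; apply/subsetP => w; rewrite !inE => /andP[wW /existsP[e /andP[eS ew]]].
    by rewrite wW /=; apply/andP; split; apply/existsP; exists e; rewrite ew ?eS ?(subsetP sS').
  have [M2 hM2] : exists M, hmatch e1 e2 (U :\: S) (W :\: nbr e1 e2 W S) M.
    apply: IH.
      rewrite cardsDS //; have : 0 < #|S| by rewrite card_gt0.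
      by move: hU; clear; lia.
    move=> S' sS'.
    have dS : [disjoint S' & S].
      by rewrite disjoint_subset; apply/subsetP => x /(subsetP sS'); rewrite !inE => /andP[].
    have := hH (S' :|: S); rewrite subUset sSU (subset_trans sS') ?subsetDl // => /(_ isT).
    rewrite (cardsU S') (_ : S' :&: S = set0); last by apply/disjoint_setI0.
    have -> : nbr e1 e2 W (S' :|: S) = nbr e1 e2 (W :\: nbr e1 e2 W S) S' :|: nbr e1 e2 W S.
      apply/setP => w; rewrite !inE.
      case wN: [exists e, (e1 e \in S) && (e2 e == w)]; rewrite ?andbT ?andbF ?orbT ?orbF.
        case wW: (w \in W); rewrite ?andbF ?orbT ?orbF //=.
        by case/existsP: wN => e /andP[eS ew]; apply/existsP; exists e; rewrite inE eS orbT ew.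
      case: (w \in W) => //=.
      apply/existsP/existsP.
      + case=> e /andP[]; rewrite inE => /orP[eS' ew|eS ew]; first by exists e; rewrite eS' ew.
        by move/negbT/negP: wN; case; apply/existsP; exists e; rewrite eS ew.
      + by case=> e /andP[eS' ew]; exists e; rewrite inE eS' ew.
    by rewrite cards0 subn0 cardsU cS'; lia.
  exists (M1 :|: M2).
  have nWS : nbr e1 e2 W S \subset W by apply/subsetP => w; rewrite inE => /andP[].
  have -> : U = S :|: U :\: S by apply/setP => x; rewrite !inE; case xS: (x \in S); rewrite //= (subsetP sSU).
  have -> : W = nbr e1 e2 W S :|: W :\: nbr e1 e2 W S.
    by apply/setP => x; rewrite in_setU in_setD; case xS: (x \in nbr e1 e2 W S); rewrite //= (subsetP nWS).
  apply: hmatchU => //.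
  + by rewrite -setI_eq0; apply/eqP/setP => x; rewrite !inE; case: (x \in S); rewrite ?andbF.
  + by rewrite -setI_eq0; apply/eqP/setP => x; rewrite in_setI in_setD in_set0; case: (x \in nbr e1 e2 W S); rewrite /= ?andbF.
- move=> /negP hS.
  case: (set_0Vmem U) => [->|[u uU]]; first by exists set0; exact: hmatch0.
  have := hH [set u]; rewrite sub1set uU cards1 => /(_ isT); rewrite card_gt0 => /set0Pn[w].
  rewrite inE => /andP[wW /existsP[e0 /andP[]]]; rewrite inE => /eqP e0u /eqP e0w.
  have [M' hM'] : exists M, hmatch e1 e2 (U :\ u) (W :\ w) M.
    apply: IH; first by move: hU; rewrite (cardsD1 u U) uU add1n ltnS.
    move=> S' sS'; case: (set_0Vmem S') => [->|[x xS]]; first by rewrite cards0.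
    have sU : S' \subset U by apply: subset_trans sS' (subsetDl _ _).
    have : #|S'| < #|nbr e1 e2 W S'|.
      rewrite ltnNge; apply/negP => c; apply: hS; apply/existsP; exists S'.
      rewrite sU c /= andbT; apply/andP; split; first by apply/set0Pn; exists x.
      apply/eqP => eSU; have : u \in S' by rewrite eSU.
      by move/(subsetP sS'); rewrite !inE eqxx.
    rewrite (cardsD1 w (nbr _ _ _ _)) => h.
    have -> : nbr e1 e2 (W :\ w) S' = nbr e1 e2 W S' :\ w.
      by apply/setP => y; rewrite !inE; case: (y == w); rewrite //= andbA.
    by move: h; case: (w \in _); rewrite ?add1n ?add0n // => /ltnW.
  exists ([set e0] :|: M').
  rewrite -(setD1K uU) -(setD1K wW); apply: hmatchU => //.
  + by rewrite -e0u -e0w; apply: hmatch1.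
  + by rewrite disjoint_subset; apply/subsetP => x; rewrite !inE => /eqP ->; rewrite eqxx.
  + by rewrite disjoint_subset; apply/subsetP => x; rewrite !inE => /eqP ->; rewrite eqxx.
Qed.

Lemma hcover (V E : finType) (e1 e2 : E -> V) U W M :
  hmatch e1 e2 U W M -> #|W| <= #|U| ->
  forall w, w \in W -> #|[set e in M | e2 e == w]| = 1.
Proof.
move=> [h1 h2 h3] cWU w0 w0W.
have cM1 : #|M| = #|U|.
  have eS : \sum_(u in U) #|[set e in M | e1 e == u]| = \sum_(u in U) 1 by apply: eq_bigr.
  rewrite sum1_card -count_fib in eS; rewrite -eS; apply: eq_card => e.
  by rewrite !inE; case eM: (e \in M); rewrite //= (andP (h1 e eM)).1.
have cM2 : #|M| = \sum_(w in W) #|[set e in M | e2 e == w]|.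
  rewrite -(count_fib M e2 W); apply: eq_card => e.
  by rewrite !inE; case eM: (e \in M); rewrite //= (andP (h1 e eM)).2.
apply/eqP; rewrite eqn_leq h3 /= lt0n; apply/negP => /eqP c0.
have : \sum_(w in W) #|[set e in M | e2 e == w]| <= (\sum_(w in W) 1).-1.
  rewrite (bigD1 w0 w0W) /= c0 add0n [X in _ <= X.-1](bigD1 w0 w0W) /= ?add0n ?add1n.
  by apply: leq_sum => w _; exact: h3.
rewrite sum1_card -cM2 cM1; move: cWU; have : 0 < #|W| by rewrite card_gt0; apply/set0Pn; exists w0.
clear; lia.
Qed.


Definition fa (G : mgraph) (A : {set vert G}) (e : edge G) :=
  if endp1 e \in A then endp1 e else endp2 e.
Definition fb (G : mgraph) (A : {set vert G}) (e : edge G) :=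
  if endp1 e \in A then endp2 e else endp1 e.
Definition touch (G : mgraph) (F : {set edge G}) v :=
  [set e in F | (endp1 e == v) || (endp2 e == v)].

Lemma fa_in G A e : @bipartite G A -> fa A e \in A.
Proof. by move=> hb; rewrite /fa; case: ifP => // h; move: (hb e); rewrite h; case: (endp2 e \in A). Qed.

Lemma fb_notin G A e : @bipartite G A -> fb A e \notin A.
Proof. by move=> hb; rewrite /fb; case: ifP => h; move: (hb e); rewrite h //; case: (endp2 e \in A). Qed.

Lemma touchE G A (e : edge G) v :
  (endp1 e == v) || (endp2 e == v) = (fa A e == v) || (fb A e == v).
Proof. by rewrite /fa /fb; case: ifP => _ //; rewrite orbC. Qed.

Lemma degE G A (F : {set edge G}) (v : vert G) : @bipartite G A -> deg F v = #|touch F v|.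
Proof.
move=> hb; rewrite /deg /touch -cardsUI.
have -> : [set e in F | endp1 e == v] :&: [set e in F | endp2 e == v] = set0.
  apply/setP => e; rewrite !inE; case: (e \in F) => //=.
  apply/negP => /andP[/eqP h1 /eqP h2]; move: (hb e); by rewrite h1 h2 eqxx.
rewrite cards0 addn0; apply: eq_card => e; rewrite !inE; by case: (e \in F).
Qed.

Lemma touchA G A (F : {set edge G}) (v : vert G) : @bipartite G A -> v \in A -> touch F v = [set e in F | fa A e == v].
Proof.
move=> hb vA; apply/setP => e; rewrite !inE (touchE A).
case: (fb A e =P v) => [h|]; rewrite ?orbF //.
by move: (fb_notin e hb); rewrite h vA.
Qed.

Lemma touchB G A (F : {set edge G}) (v : vert G) : @bipartite G A -> v \notin A -> touch F v = [set e in F | fb A e == v].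
Proof.
move=> hb vA; apply/setP => e; rewrite !inE (touchE A).
case: (fa A e =P v) => [h|]; rewrite ?orbF //=.
by move: (fa_in e hb); rewrite h (negbTE vA).
Qed.

Lemma deg_eq G (F F' : {set edge G}) (v : vert G) :
  (forall e, (endp1 e == v) || (endp2 e == v) -> (e \in F) = (e \in F')) -> deg F v = deg F' v.
Proof.
move=> h; rewrite /deg; congr (_ + _); apply: eq_card => e; rewrite !inE.
- by case: (endp1 e =P v) => [/eqP hv|]; rewrite ?andbF ?andbT // h ?hv.
- by case: (endp2 e =P v) => [/eqP hv|]; rewrite ?andbF ?andbT // h ?hv ?orbT.
Qed.

Lemma sumdegA G A (F : {set edge G}) (S : {set vert G}) : @bipartite G A ->
  #|[set e in F | fa A e \in S]| = \sum_(v in S :&: A) deg F v.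
Proof.
move=> hb; have -> : [set e in F | fa A e \in S] = [set e in F | fa A e \in S :&: A].
  by apply/setP => e; rewrite !inE fa_in ?andbT.
rewrite count_fib; apply: eq_bigr => v; rewrite inE => /andP[_ vA].
by rewrite (degE _ _ hb) (touchA _ hb).
Qed.

Lemma sumdegB G A (F : {set edge G}) (S : {set vert G}) : @bipartite G A ->
  #|[set e in F | fb A e \in S]| = \sum_(v in S :&: ~: A) deg F v.
Proof.
move=> hb; have -> : [set e in F | fb A e \in S] = [set e in F | fb A e \in S :&: ~: A].
  by apply/setP => e; rewrite !inE fb_notin ?andbT.
rewrite count_fib; apply: eq_bigr => v; rewrite !inE => /andP[_ vA].
by rewrite (degE _ _ hb) (touchB _ hb).
Qed.

Lemma sum_const_deg G (F : {set edge G}) (S : {set vert G}) k :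
  (forall v, v \in S -> deg F v = k) -> \sum_(v in S) deg F v = #|S| * k.
Proof. by move=> h; rewrite (eq_bigr _ h) sum_nat_const. Qed.

Lemma cardAB G A : @bipartite G A -> cubic G -> #|A| = #|~: A|.
Proof.
move=> hb hc.
have h1 := sumdegA [set: edge G] [set: vert G] hb.
have h2 := sumdegB [set: edge G] [set: vert G] hb.
rewrite setTI (sum_const_deg (k:=3)) in h1; last by move=> v _; exact: hc.
rewrite setTI (sum_const_deg (k:=3)) in h2; last by move=> v _; exact: hc.
have : [set e in [set: edge G] | fa A e \in [set: vert G]] = [set e in [set: edge G] | fb A e \in [set: vert G]].
  by apply/setP => e; rewrite !inE.
by move=> e; move: h1 h2; rewrite e => ->; lia.
Qed.

Lemma hall_cubic (V E : finType) (g1 g2 : E -> V) (U W0 : {set V}) (e0 : E) :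
  (forall e, g1 e \in U -> g2 e \in W0) ->
  (forall u, u \in U -> #|[set e in [set: E] | g1 e == u]| = 3) ->
  (forall w, #|[set e in [set: E] | g2 e == w]| <= 3) ->
  g2 e0 \in W0 -> g1 e0 \notin U ->
  forall S : {set V}, S \subset U -> #|S| <= #|nbr g1 g2 (W0 :\ g2 e0) S|.
Proof.
move=> hUW h3 h3' w0W e0U S sSU.
set T := nbr g1 g2 W0 S.
have c1 : #|[set e in [set: E] | g1 e \in S]| = #|S| * 3.
  rewrite count_fib -sum_nat_const; apply: eq_bigr => u uS; exact: h3 (subsetP sSU u uS).
have c2 : #|[set e in [set: E] | g2 e \in T]| <= #|T| * 3.
  rewrite count_fib -sum_nat_const; apply: leq_sum => w _; exact: h3'.
have sub : [set e in [set: E] | g1 e \in S] \subset [set e in [set: E] | g2 e \in T].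
  apply/subsetP => e; rewrite !inE /= => eS; apply/andP; split; first by apply: hUW; exact: (subsetP sSU).
  by apply/existsP; exists e; rewrite eS eqxx.
have -> : nbr g1 g2 (W0 :\ g2 e0) S = T :\ g2 e0.
  by apply/setP => y; rewrite !inE; case: (y == g2 e0); rewrite //= andbA.
move: c2; rewrite (cardsD1 (g2 e0) T); case wT: (g2 e0 \in T) => c2.
- have pr : [set e in [set: E] | g1 e \in S] \proper [set e in [set: E] | g2 e \in T].
    apply/properP; split=> //; exists e0; first by apply/setIdP; split; rewrite ?in_setT ?wT.
    by apply/negP => /setIdP[_ h]; move: (subsetP sSU _ h); rewrite (negbTE e0U).
  have := proper_card pr; rewrite c1 => c3; move: (leq_trans c3 c2); lia.
- have := subset_leq_card sub; rewrite c1 => c3; move: (leq_trans c3 c2); lia.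
Qed.

Lemma pm_exists G A (e0 : edge G) : @bipartite G A -> cubic G ->
  exists M, perfect_matching M /\ e0 \in M.
Proof.
move=> hb hc.
have d3A : forall u, u \in A -> #|[set e in [set: edge G] | fa A e == u]| = 3.
  by move=> u uA; rewrite -(touchA _ hb) // -(degE _ _ hb); exact: hc.
have d3B : forall u, u \notin A -> #|[set e in [set: edge G] | fb A e == u]| = 3.
  by move=> u uA; rewrite -(touchB _ hb) // -(degE _ _ hb); exact: hc.
have [M' hM'] : exists M, hmatch (fa A) (fb A) (A :\ fa A e0) (~: A :\ fb A e0) M.
  apply: (hall (n := #|A :\ fa A e0|)) => //.
  apply: (hall_cubic (W0 := ~: A)) => [e _|u|w||].
  - by rewrite inE fb_notin.
  - by rewrite inE => /andP[_]; exact: d3A.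
  - case: (boolP (w \in A)) => wA; last by rewrite d3B.
    rewrite (_ : [set _ in _ | _] = set0) ?cards0 //; apply/setP => e; rewrite !inE.
    by apply/negP => /eqP h; move: (fb_notin e hb); rewrite h wA.
  - by rewrite inE fb_notin.
  - by rewrite !inE eqxx.
have hM : hmatch (fa A) (fb A) A (~: A) ([set e0] :|: M').
  have := hmatchU (hmatch1 (fa A) (fb A) e0) hM'.
  rewrite !setD1K ?inE ?fb_notin ?fa_in //; apply.
  + by rewrite disjoint_subset; apply/subsetP => x; rewrite !inE => /eqP ->; rewrite eqxx.
  + by rewrite disjoint_subset; apply/subsetP => x; rewrite !inE => /eqP ->; rewrite eqxx.
exists ([set e0] :|: M'); split; last by rewrite !inE eqxx.
move=> v; rewrite (degE _ _ hb); case: (boolP (v \in A)) => vA.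
- by rewrite (touchA _ hb) //; case: hM => _ -> .
- rewrite (touchB _ hb) //; apply: (hcover hM); last by rewrite inE.
  by rewrite -(cardAB hb hc).
Qed.


Definition restr G (S : {set vert G}) (F : {set edge G}) : {set edge (contract S)} :=
  [set e' | val e' \in F].
Definition clift G (S : {set vert G}) (F' : {set edge (contract S)}) : {set edge G} :=
  [set val e' | e' in F'].

Lemma restr_lift G (S : {set vert G}) (F' : {set edge (contract S)}) : restr S (clift F') = F'.
Proof. by apply/setP => e'; rewrite inE (mem_imset _ _ val_inj). Qed.

Lemma lift_valid G (S : {set vert G}) (F' : {set edge (contract S)}) e : e \in clift F' -> ~~ ((endp1 e \in S) && (endp2 e \in S)).
Proof. by case/imsetP => e' _ ->; exact: (valP e'). Qed.

Lemma insub_eqSome G (S : {set vert G}) (x : vert G) (u : {v : vert G | v \notin S}) :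
  (insub x == Some u) = (x == val u).
Proof.
case: insubP => [u' _ <-|nP] /=; first by rewrite (inj_eq val_inj).
apply/esym/negP => /eqP hx; move: nP; by rewrite hx (valP u).
Qed.

Lemma insub_eqNone G (S : {set vert G}) (x : vert G) :
  (insub x == None :> option {v : vert G | v \notin S}) = (x \in S).
Proof. by case: insubP => [u' P _|nP] /=; [ apply/esym/negbTE | apply/esym/negbNE]. Qed.

Lemma card_val G (S : {set vert G}) (P : pred (edge G)) :
  (forall e, P e -> ~~ ((endp1 e \in S) && (endp2 e \in S))) ->
  #|[set e' : edge (contract S) | P (val e')]| = #|[set e | P e]|.
Proof.
move=> hP; rewrite -(card_imset _ val_inj); apply: eq_card => e; rewrite inE.
apply/imsetP/idP => [[e' ]|Pe]; first by rewrite inE => h ->.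
by exists (exist _ e (hP e Pe)); rewrite ?inE.
Qed.

Lemma deg_restr_Some G (S : {set vert G}) (F : {set edge G}) (u : {v : vert G | v \notin S}) :
  deg (restr S F) (Some u) = deg F (val u).
Proof.
rewrite /deg.
have -> : [set e in restr S F | endp1 e == Some u] =
          [set e' : edge (contract S) | (val e' \in F) && (endp1 (val e') == val u)].
  by apply/setP => e'; rewrite !inE /= insub_eqSome.
have -> : [set e in restr S F | endp2 e == Some u] =
          [set e' : edge (contract S) | (val e' \in F) && (endp2 (val e') == val u)].
  by apply/setP => e'; rewrite !inE /= insub_eqSome.
rewrite (card_val (P := fun e => (e \in F) && (endp1 e == val u))); last first.
  by move=> e /andP[_ /eqP ->]; rewrite (negbTE (valP u)).
rewrite (card_val (P := fun e => (e \in F) && (endp2 e == val u))); last first.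
  by move=> e /andP[_ /eqP ->]; rewrite (negbTE (valP u)) andbF.
by congr (_ + _); apply: eq_card => e; rewrite !inE.
Qed.

Lemma deg_restr_None G (S : {set vert G}) (F : {set edge G}) :
  deg (restr S F) None = #|cut S :&: F|.
Proof.
rewrite /deg.
have -> : [set e in restr S F | endp1 e == None] =
          [set e' : edge (contract S) | [&& val e' \in F, endp1 (val e') \in S & endp2 (val e') \notin S]].
  apply/setP => e'; rewrite !inE /= insub_eqNone.
  by case: (endp1 (val e') \in S) (valP e') => //=; case: (endp2 (val e') \in S); rewrite ?andbF.
have -> : [set e in restr S F | endp2 e == None] =
          [set e' : edge (contract S) | [&& val e' \in F, endp2 (val e') \in S & endp1 (val e') \notin S]].
  apply/setP => e'; rewrite !inE /= insub_eqNone.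
  by case: (endp2 (val e') \in S) (valP e') => //=; case: (endp1 (val e') \in S); rewrite ?andbF.
rewrite (card_val (P := fun e => [&& e \in F, endp1 e \in S & endp2 e \notin S])); last first.
  by move=> e /and3P[_ h1 h2]; rewrite h1 (negbTE h2).
rewrite (card_val (P := fun e => [&& e \in F, endp2 e \in S & endp1 e \notin S])); last first.
  by move=> e /and3P[_ h1 h2]; rewrite h1 (negbTE h2) andbT.
rewrite -cardsUI.
have -> : [set e | [&& e \in F, endp1 e \in S & endp2 e \notin S]] :&:
          [set e | [&& e \in F, endp2 e \in S & endp1 e \notin S]] = set0.
  apply/setP => e; rewrite !inE; case: (endp1 e \in S); case: (endp2 e \in S); by rewrite ?andbF.
rewrite cards0 addn0; apply: eq_card => e; rewrite !inE.
by case: (e \in F); case: (endp1 e \in S); case: (endp2 e \in S).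
Qed.

Lemma deg_lift_Some G (S : {set vert G}) (F' : {set edge (contract S)}) (u : {v : vert G | v \notin S}) :
  deg (clift F') (val u) = deg F' (Some u).
Proof. by rewrite -{2}(restr_lift F') deg_restr_Some. Qed.

Lemma deg_lift_None G (S : {set vert G}) (F' : {set edge (contract S)}) :
  #|cut S :&: clift F'| = deg F' None.
Proof. by rewrite -{2}(restr_lift F') deg_restr_None. Qed.


Lemma card_split (T : finType) (F : {set T}) (P Q : pred T) :
  #|[set e in F | P e]| = #|[set e in F | P e && Q e]| + #|[set e in F | P e && ~~ Q e]|.
Proof.
rewrite -cardsUI.
have -> : [set e in F | P e && Q e] :&: [set e in F | P e && ~~ Q e] = set0.
  by apply/setP => e; rewrite !inE; case: (Q e); rewrite ?andbF.
rewrite cards0 addn0; apply: eq_card => e; rewrite !inE.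
by case: (e \in F); case: (P e); case: (Q e).
Qed.

Lemma cut_fab G A (X : {set vert G}) e :
  e \in cut X = ((fa A e \in X) != (fb A e \in X)).
Proof. by rewrite inE /fa /fb; case: ifP => _ //; rewrite eq_sym. Qed.

Lemma sum_eq1 (T : finType) (S : {set T}) a :
  \sum_(v in S) (v == a) = (a \in S).
Proof.
case: (boolP (a \in S)) => aS.
  rewrite (bigD1 a aS) eqxx big1 // => v /andP[_ /negbTE ->] //.
by rewrite big1 // => v vS; case: (v =P a) => // h; move: aS; rewrite -h vS.
Qed.

Lemma lamsum G (a b : vert G) F (S : {set vert G}) :
  lambda_matching a b F -> a != b ->
  \sum_(v in S) deg F v = #|S| + 2 * (a \in S) + 2 * (b \in S).
Proof.
move=> hF ab.
rewrite (eq_bigr (fun v => 1 + 2 * (v == a) + 2 * (v == b))); last first.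
  move=> v _; rewrite hF; case: (v =P a) => [->|]; first by rewrite (negbTE ab).
  by case: (v =P b).
rewrite !big_split /= sum1_card -!sum_eq1.
have z : \sum_(i in S) 0 = 0 by rewrite big1.
by rewrite z; lia.
Qed.

Lemma le3_fa G A w : @bipartite G A -> cubic G -> #|[set e in [set: edge G] | fa A e == w]| <= 3.
Proof.
move=> hb hc; rewrite -(hc w) (degE _ _ hb); apply: subset_leq_card; apply/subsetP => e.
by rewrite !inE (touchE A) /= => ->.
Qed.

Lemma le3_fb G A w : @bipartite G A -> cubic G -> #|[set e in [set: edge G] | fb A e == w]| <= 3.
Proof.
move=> hb hc; rewrite -(hc w) (degE _ _ hb); apply: subset_leq_card; apply/subsetP => e.
by rewrite !inE (touchE A) /= => ->; rewrite orbT.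
Qed.

Lemma eq3_fa G A w : @bipartite G A -> cubic G -> w \in A -> #|[set e in [set: edge G] | fa A e == w]| = 3.
Proof. by move=> hb hc wA; rewrite -(touchA _ hb) // -(degE _ _ hb) hc. Qed.

Lemma eq3_fb G A w : @bipartite G A -> cubic G -> w \notin A -> #|[set e in [set: edge G] | fb A e == w]| = 3.
Proof. by move=> hb hc wA; rewrite -(touchB _ hb) // -(degE _ _ hb) hc. Qed.

Lemma some_insub G (S : {set vert G}) (u : {v : vert G | v \notin S}) x :
  (Some u == insub x) = (val u == x).
Proof. by rewrite eq_sym insub_eqSome eq_sym. Qed.

Lemma none_insub G (S : {set vert G}) x :
  (None == insub x :> option {v : vert G | v \notin S}) = (x \in S).
Proof. by rewrite eq_sym insub_eqNone. Qed.

Lemma cutC G (X : {set vert G}) : cut (~: X) = cut X.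
Proof. by apply/setP => e; rewrite !inE; case: (endp1 e \in X); case: (endp2 e \in X). Qed.

Theorem lemma2p2 (H : mgraph) (A X : {set vert H}) :
  connected H -> cubic H -> bipartite A ->
  tight_cut X ->
  (* notation chosen so that X^+ = X :&: ~: A ⊆ B, X^- = X :&: A *)
  #|X :&: A| < #|X :&: ~: A| ->
  let H1 := contract (~: X) in   (* H / Xbar -> xbar, xbar = None *)
  let H2 := contract X in        (* H / X -> x, x = None *)
  (* (i) a ∈ X^-, b ∈ Xbar^- *)
  (forall a b, a \in X :&: A -> b \in ~: X :&: ~: A ->
     ~ lambda_matchable a b) /\
  (* (ii) a ∈ X^-, b ∈ X^+ *)
  (forall a b, a \in X :&: A -> b \in X :&: ~: A ->
     lambda_matchable a b <-> @lambda_matchable H1 (insub a) (insub b)) /\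
  (* (iii) a ∈ Xbar^+, b ∈ X^+ *)
  (forall a b, a \in ~: X :&: A -> b \in X :&: ~: A ->
     lambda_matchable a b <->
     (@lambda_matchable H1 None (insub b) /\ @lambda_matchable H2 (insub a) None)).
Proof.
move=> _ hc hb [X0 XT htight] hXA H1 H2; subst H1 H2.
pose f (F : {set edge H}) := #|[set e in F | (fa A e \in X) && (fb A e \in X)]|.
pose cA (F : {set edge H}) := #|[set e in F | (fa A e \in X) && (fb A e \notin X)]|.
pose cB (F : {set edge H}) := #|[set e in F | (fb A e \in X) && (fa A e \notin X)]|.
have E1 (F : {set edge H}) : #|[set e in F | fa A e \in X]| = f F + cA F by apply: card_split.
have E2 (F : {set edge H}) : #|[set e in F | fb A e \in X]| = f F + cB F.
  rewrite (card_split F (fun e => fb A e \in X) (fun e => fa A e \in X)); congr (_ + _).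
  by apply: eq_card => e; rewrite !inE; case: (e \in F); rewrite //= andbC.
have E3 (F : {set edge H}) : #|cut X :&: F| = cA F + cB F.
  have -> : cut X :&: F = [set e in F | e \in cut X] by apply/setP => e; rewrite !inE andbC.
  rewrite (card_split F (fun e => e \in cut X) (fun e => fa A e \in X)); congr (_ + _).
  - apply: eq_card => e; rewrite !inE /fa /fb; case: (endp1 e \in A);
    by case: (e \in F); case: (endp1 e \in X); case: (endp2 e \in X).
  - apply: eq_card => e; rewrite !inE /fa /fb; case: (endp1 e \in A);
    by case: (e \in F); case: (endp1 e \in X); case: (endp2 e \in X).
have cnt_pm (M : {set edge H}) : perfect_matching M ->
   #|[set e in M | fa A e \in X]| = #|X :&: A| /\ #|[set e in M | fb A e \in X]| = #|X :&: ~: A|.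
  move=> hM; rewrite (sumdegA _ _ hb) (sumdegB _ _ hb).
  rewrite !(sum_const_deg (k := 1)) ?muln1 //; by move=> v _; exact: hM.
have K e : fa A e \in X -> fb A e \in X.
  move=> eX; apply/contraT => eB.
  have [M [hM eM]] := pm_exists e hb hc.
  have := htight M hM; rewrite E3.
  have [c1 c2] := cnt_pm M hM; rewrite E1 in c1; rewrite E2 in c2.
  have : 0 < cA M by rewrite card_gt0; apply/set0Pn; exists e; rewrite !inE eM eX eB.
  move: hXA; rewrite -c1 -c2; lia.
have cA0 (F : {set edge H}) : cA F = 0.
  apply/eqP; rewrite cards_eq0; apply/eqP/setP => e; rewrite !inE.
  by case h: (fa A e \in X); rewrite ?andbF //= K ?andbF.
have [e00 _] : exists e : edge H, True.
  case/set0Pn: X0 => v _; have := hc v; rewrite (degE _ _ hb) => h.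
  have : 0 < #|touch [set: edge H] v| by rewrite h.
  by rewrite card_gt0 => /set0Pn[e _]; exists e.
have XAB : #|X :&: ~: A| = #|X :&: A| + 1.
  have [M [hM _]] := pm_exists e00 hb hc.
  have := htight M hM; rewrite E3 cA0.
  have [c1 c2] := cnt_pm M hM; rewrite E1 cA0 in c1; rewrite E2 in c2.
  move: hXA; rewrite -c1 -c2; lia.
have cut3 : #|cut X| = 3.
  have := E1 setT; have := E2 setT; have := E3 setT; rewrite setIT cA0.
  rewrite (sumdegA _ _ hb) (sumdegB _ _ hb) !(sum_const_deg (k := 3)); try by move=> v _; exact: hc.
  by move: XAB; lia.
have Ecut (F : {set edge H}) : #|[set e in F | fb A e \in X]| = #|[set e in F | fa A e \in X]| + #|cut X :&: F|.
  by rewrite E1 E2 E3 cA0; lia.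
have LA (F : {set edge H}) (a b : vert H) : lambda_matching a b F -> a != b ->
    #|[set e in F | fa A e \in X]| = #|X :&: A| + 2 * (a \in X :&: A) + 2 * (b \in X :&: A).
  by move=> hF ab; rewrite (sumdegA _ _ hb); apply: lamsum.
have LB (F : {set edge H}) (a b : vert H) : lambda_matching a b F -> a != b ->
    #|[set e in F | fb A e \in X]| = #|X :&: ~: A| + 2 * (a \in X :&: ~: A) + 2 * (b \in X :&: ~: A).
  by move=> hF ab; rewrite (sumdegB _ _ hb); apply: lamsum.
have neqAB (a b : vert H) : a \in A -> b \notin A -> a != b.
  by move=> aA bA; apply/eqP => h; move: bA; rewrite -h aA.
split; [|split].
- move=> a b /setIP[aX aA] /setIP[bX bA] [F hF]; rewrite inE in bX; rewrite inE in bA.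
  have ab := neqAB a b aA bA.
  have := LA F a b hF ab; have := LB F a b hF ab; have := Ecut F.
  rewrite !inE aX aA (negbTE bX) (negbTE bA) /=.
  by move: XAB; lia.
- move=> a b /setIP[aX aA] /setIP[bX bB]; rewrite inE in bB.
  have ab := neqAB a b aA bB.
  split.
  + case=> F hF.
    have c1 : #|cut X :&: F| = 1.
      have := LA F a b hF ab; have := LB F a b hF ab; have := Ecut F.
      rewrite !inE aX aA bX (negbTE bB) /=; move: XAB; lia.
    exists (restr (~: X) F) => -[u|].
    * by rewrite deg_restr_Some hF !some_insub.
    * by rewrite deg_restr_None cutC c1 !none_insub !inE aX bX.
  + case=> F' hF'.
    pose F0 := clift F'.
    have hF0 (v : vert H) : v \in X -> deg F0 v = if (v == a) || (v == b) then 3 else 1.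
      move=> vX; have vX' : v \notin ~: X by rewrite inE vX.
      have := deg_lift_Some F' (exist _ v vX'); rewrite hF' !some_insub /= => ->; done.
    have /cards1P[e ce] : #|cut X :&: F0| == 1.
      by rewrite -cutC deg_lift_None hF' !none_insub !inE aX bX.
    have : e \in cut X :&: F0 by rewrite ce set11.
    rewrite inE => /andP[eC eF0].
    have [fbX faX] : fb A e \in X /\ fa A e \notin X.
      move: eC; rewrite (cut_fab A); case h: (fa A e \in X); first by rewrite (K e h).
      by case: (fb A e \in X).
    have zA : fa A e \in A := fa_in e hb.
    have onlyE e' v : v \notin X -> (endp1 e' == v) || (endp2 e' == v) -> e' \in F0 -> e' = e.
      move=> vX t e'F; have lv := lift_valid e'F.
      have : e' \in cut X :&: F0.
        rewrite inE e'F andbT inE.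
        by case/orP: t => /eqP ev; move: lv; rewrite !inE ev (negbTE vX) /=; case: (_ \in X).
      by rewrite ce inE => /eqP.
    have [M2 hM2] : exists M, hmatch (fb A) (fa A) (~: X :&: ~: A) ((~: X :&: A) :\ fa A e) M.
      apply: (hall (n := #|~: X :&: ~: A|)) => //.
      apply: (hall_cubic (W0 := ~: X :&: A)).
      - move=> e'; rewrite !inE => /andP[e'X _]; rewrite fa_in // andbT.
        by apply/negP => h; move: (K e' h); rewrite (negbTE e'X).
      - move=> u; rewrite !inE => /andP[_ uA]; exact: eq3_fb.
      - move=> w; exact: le3_fa.
      - by rewrite !inE faX (fa_in e hb).
      - by rewrite !inE fbX.
    have s1 : #|X :&: A| + #|~: X :&: A| = #|A|.
      by rewrite -(cardsID X A) setDE setIC [A :&: ~: X]setIC.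
    have s2 : #|X :&: ~: A| + #|~: X :&: ~: A| = #|~: A|.
      by rewrite -(cardsID X (~: A)) setDE setIC [~: A :&: ~: X]setIC.
    have cov : forall w, w \in (~: X :&: A) :\ fa A e -> #|[set e' in M2 | fa A e' == w]| = 1.
      apply: (hcover hM2).
      have := cardsD1 (fa A e) (~: X :&: A); rewrite !inE faX zA /=.
      have := cardAB hb hc; move: s1 s2 XAB; lia.
    case: hM2 => M2in M2c _.
    have notM2 e' v : v \in X -> (endp1 e' == v) || (endp2 e' == v) -> e' \notin M2.
      move=> vX t; apply/negP => /M2in; rewrite !inE => /andP[/andP[h1 _] /andP[_ /andP[h2 _]]].
      by move: t; rewrite (touchE A); case/orP => /eqP ev; move: vX; rewrite -ev ?(negbTE h1) ?(negbTE h2).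
    exists (F0 :|: M2) => v.
    case: (boolP (v \in X)) => vX.
    * rewrite -hF0 //; apply: deg_eq => e' t; rewrite in_setU (negbTE (notM2 e' v vX t)) orbF //.
    * have -> : (v == a) || (v == b) = false.
        by apply/negbTE; apply/negP => /orP[] /eqP ev; move: vX; rewrite ev ?aX ?bX.
      case: (v =P fa A e) => [->|vz].
      -- rewrite (deg_eq (F' := [set e])).
           by rewrite (degE _ _ hb) (touchA _ hb) // -(cards1 e); apply: eq_card => e'; rewrite !inE;
              case: (e' =P e) => [->|]; rewrite ?eqxx.
         move=> e' t; rewrite in_setU inE; case: (e' =P e) => [->|ne]; first by rewrite eF0.
         case e'F: (e' \in F0); first by move: (onlyE e' (fa A e)); move=> /(_ faX t e'F).
         apply/negP => /M2in; rewrite !inE => /andP[/andP[_ h1] /andP[h2 _]].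
         move: t; rewrite (touchE A); case/orP => /eqP ev; first by move: h2; rewrite ev eqxx.
         by move: h1; rewrite ev zA.
      -- rewrite (deg_eq (F' := M2)).
           rewrite (degE _ _ hb); case: (boolP (v \in A)) => vA.
           ++ rewrite (touchA _ hb) //; apply: cov; rewrite !inE (negbTE vX) vA !andbT; exact/eqP.
           ++ rewrite (touchB _ hb) //; apply: M2c; by rewrite !inE vX vA.
         move=> e' t; rewrite in_setU; case e'F: (e' \in F0) => //=.
         have ee := onlyE e' v vX t e'F; move: t; rewrite ee (touchE A) => /orP[] /eqP ev.
           by case: vz; rewrite -ev.
         by move: vX; rewrite -ev fbX.
- move=> a b /setIP[aX aA] /setIP[bX bB]; rewrite inE in aX; rewrite inE in bB.
  have ab := neqAB a b aA bB.
  have bna v : v \in X -> (v == a) = false.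
    by move=> vX; apply/negbTE/eqP => ev; move: aX; rewrite -ev vX.
  have bnb v : v \notin X -> (v == b) = false.
    by move=> vX; apply/negbTE/eqP => ev; move: vX; rewrite ev bX.
  split.
  + case=> F hF.
    have c3 : #|cut X :&: F| = 3.
      have := LA F a b hF ab; have := LB F a b hF ab; have := Ecut F.
      rewrite !inE (negbTE aX) aA bX (negbTE bB) /=; move: XAB; lia.
    split.
    * exists (restr (~: X) F) => -[u|].
      -- have uX : val u \in X by move: (valP u); rewrite inE negbK.
         by rewrite deg_restr_Some hF some_insub /= (bna _ uX).
      -- by rewrite deg_restr_None cutC c3.
    * exists (restr X F) => -[u|].
      -- by rewrite deg_restr_Some hF some_insub /= (bnb _ (valP u)) orbF.
      -- by rewrite deg_restr_None c3 /= ?eqxx ?orbT.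
  + case=> [[F1' hF1] [F2' hF2]].
    pose F1 := clift F1'. pose F2 := clift F2'.
    have c1 : #|cut X :&: F1| = 3 by rewrite -cutC deg_lift_None hF1.
    have c2 : #|cut X :&: F2| = 3 by rewrite deg_lift_None hF2 /= ?eqxx ?orbT.
    have e1 : cut X :&: F1 = cut X by apply/eqP; rewrite eqEcard subsetIl c1 cut3.
    have e2 : cut X :&: F2 = cut X by apply/eqP; rewrite eqEcard subsetIl c2 cut3.
    have sub1 e : e \in cut X -> e \in F1 by rewrite -e1 inE => /andP[].
    have sub2 e : e \in cut X -> e \in F2 by rewrite -e2 inE => /andP[].
    have tcut e v : v \in X -> (endp1 e == v) || (endp2 e == v) ->
        ~~ ((endp1 e \in X) && (endp2 e \in X)) -> e \in cut X.
      move=> vX t; rewrite inE; case/orP: t => /eqP ev; rewrite ev vX /=.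
        by case: (endp2 e \in X).
      by case: (endp1 e \in X).
    exists ([set e in F1 | (endp1 e \in X) && (endp2 e \in X)] :|: F2) => v.
    case: (boolP (v \in X)) => vX.
    * rewrite (deg_eq (F' := F1)); last first.
        move=> e t; rewrite in_setU inE; case e1F: (e \in F1) => /=.
          case h: ((endp1 e \in X) && (endp2 e \in X)) => //=.
          by apply: sub2; apply: tcut vX t _; rewrite h.
        apply/negbTE/negP => eF2; have := sub1 e (tcut e v vX t (lift_valid eF2)).
        by rewrite e1F.
      have vX' : v \notin ~: X by rewrite inE vX.
      have := deg_lift_Some F1' (exist _ v vX'); rewrite hF1 some_insub /= => ->.
      by rewrite (bna _ vX).
    * rewrite (deg_eq (F' := F2)); last first.
        move=> e t; rewrite in_setU inE.
        case/orP: t => /eqP ev; rewrite ev (negbTE vX) /= ?andbF //.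
      have := deg_lift_Some F2' (exist _ v vX); rewrite hF2 some_insub /= => ->.
      by rewrite (bnb _ vX) orbF.
Qed.
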